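(* Let $(X,Y)$ be a pair of continuous random variables with joint distribution function $H$, marginal distribution functions $F$ (of $X$) and $G$ (of $Y$), and copula $C$, so that $H(x,y)=C(F(x),G(y))$. For $p,q\in[0,1]$ define $$\lambda_{Y|X}(q|p)=\lim_{t\to 0^+} P\{G^{-1}((q-t)^+)<Y\le G^{-1}((q+t)^-)\mid F^{-1}((p-t)^+)<X\le F^{-1}((p+t)^-)\},$$ $$\lambda_{X|Y}(p|q)=\lim_{t\to 0^+} P\{F^{-1}((p-t)^+)<X\le F^{-1}((p+t)^-)\mid G^{-1}((q-t)^+)<Y\le G^{-1}((q+t)^-)\}.$$ Then for $p,q\in[0,1]$, $$\lambda_{Y|X}(q|p)=\lim_{t\to0^+}\frac{V_C([(p-t)^+,(p+t)^-]\times[(q-t)^+,(q+t)^-])}{(p+t)^- - (p-t)^+},\qquad \lambda_{X|Y}(p|q)=\lim_{t\to0^+}\frac{V_C([(p-t)^+,(p+t)^-]\times[(q-t)^+,(q+t)^-])}{(q+t)^- - (q-t)^+},$$ provided the limits exist.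
   Context: For real $a$, $a^+=\max(a,0)$ and $a^-=1-(1-a)^+$. For a distribution function $F$, $F^{-1}(u)=\inf\{x\in\mathbb{R}:F(x)\ge u\}$ is its generalized inverse (quantile function). A copula is a bivariate distribution function on $[0,1]^2$ with uniform$(0,1)$ margins. For $0\le u_1\le u_2\le1$, $0\le v_1\le v_2\le 1$, the $C$-volume is $V_C([u_1,u_2]\times[v_1,v_2])=C(u_2,v_2)-C(u_2,v_1)-C(u_1,v_2)+C(u_1,v_1)$. *)

(* Defs.v *)
From HB Require Import structures.
From mathcomp Require Import all_boot all_order all_algebra.
From mathcomp Require Import all_classical all_reals all_analysis.
Set Implicit Arguments. Unset Strict Implicit. Unset Printing Implicit Defensive.
Import Order.TTheory GRing.Theory Num.Theory.
Import numFieldNormedType.Exports.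
Local Open Scope classical_set_scope.
Local Open Scope ring_scope.

Section Defs.
Context (R : realType).

Definition ppart (a : R) : R := Num.max a 0.
Definition npart (a : R) : R := 1 - ppart (1 - a).

(* generalized inverse F^{-1}(u) = inf {x in R : F x >= u}, in the extended reals
   (it is -oo for u = 0 and may be +oo for u = 1) *)
Definition qinv (F : R -> R) (u : R) : \bar R :=
  ereal_inf [set x%:E | x in [set x : R | u <= F x]].

Definition Cvol (C : R -> R -> R) (u1 u2 v1 v2 : R) : R :=
  C u2 v2 - C u2 v1 - C u1 v2 + C u1 v1.

Definition is_copula (C : R -> R -> R) : Prop :=
  (forall u, 0 <= u <= 1 -> [/\ C u 0 = 0, C 0 u = 0, C u 1 = u & C 1 u = u]) /\
  (forall u1 u2 v1 v2, 0 <= u1 -> u1 <= u2 -> u2 <= 1 ->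
     0 <= v1 -> v1 <= v2 -> v2 <= 1 -> 0 <= Cvol C u1 u2 v1 v2).

Context (d : measure_display) (T : measurableType d) (P : probability T R).

Definition distrfun (X : T -> R) (x : R) : R := fine (P [set w | X w <= x]).
Definition joint_distrfun (X Y : T -> R) (x y : R) : R :=
  fine (P [set w | X w <= x /\ Y w <= y]).

Definition condprobE (A B : set T) : R := fine (P (A `&` B)) / fine (P B).

Definition qband (X : T -> R) (F : R -> R) (a b : R) : set T :=
  [set w | (qinv F a < (X w)%:E)%E /\ ((X w)%:E <= qinv F b)%E].

End Defs.

(* Main.v *)
Require Import Defs.
From HB Require Import structures.
From mathcomp Require Import all_boot all_order all_algebra.
From mathcomp Require Import all_classical all_reals all_analysis.
From mathcomp Require Import ring lra.
Import Order.TTheory GRing.Theory Num.Theory.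
Import numFieldNormedType.Exports.
Local Open Scope classical_set_scope.
Local Open Scope ring_scope.

Section S.
Context (d : measure_display) (T : measurableType d) (R : realType)
  (P : probability T R) (X : T -> R).
Hypothesis mX : measurable_fun setT X.

Lemma mXle m : measurable [set w | X w <= m].
Proof.
have := mX measurableT _ (measurable_itv `]-oo, m]); rewrite setTI.
by congr measurable; apply/seteqP; split => w /=; rewrite in_itv.
Qed.

Lemma F_ge0 x : 0 <= distrfun P X x.
Proof. by rewrite /distrfun fine_ge0. Qed.

Lemma Pfin (A : set T) : measurable A -> P A \is a fin_num.
Proof. by move=> mA; rewrite ge0_fin_numE // (le_lt_trans (probability_le1 P mA)) // ltey. Qed.

Lemma F_le1 x : distrfun P X x <= 1.
Proof. have mx := mXle x. have := probability_le1 P mx. by rewrite -(fineK (Pfin _ mx)) lee_fin. Qed.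

Lemma F_mono x y : x <= y -> distrfun P X x <= distrfun P X y.
Proof.
move=> xy; have mx := mXle x; have my := mXle y.
rewrite /distrfun -lee_fin !fineK ?Pfin //.
apply: le_measure; rewrite ?inE //.
by move=> w /= /le_trans; apply.
Qed.

Lemma F_big u : u < 1 -> exists x, u < distrfun P X x.
Proof.
move=> u1; apply/not_existsP => H.
pose E (n : nat) := [set w | X w <= n%:R].
have mE : forall n, measurable (E n) by move=> n; exact: mXle.
have UE : \bigcup_n E n = setT.
  apply/seteqP; split => // w _; exists (Num.truncn (X w)).+1 => //.
  exact/ltW/truncnS_gt.
have ndE : nondecreasing_seq E.
  by move=> n m nm; apply/subsetPset => w /= /le_trans; apply; rewrite ler_nat.
have cv : (P \o E) n @[n --> \oo] --> 1%E.
  rewrite -(probability_setT P) -UE; apply: nondecreasing_cvg_mu => //.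
  by rewrite UE.
have : (lim ((P \o E) n @[n --> \oo]) <= u%:E)%E.
  apply: lime_le; first by apply/cvg_ex; exists 1%E.
  near=> n => /=; have /negP := H n%:R; rewrite -leNgt -lee_fin /distrfun.
  by rewrite fineK //; exact: Pfin (mE n).
rewrite (cvg_lim _ cv) // lee_fin => /(lt_le_trans u1); rewrite ltxx.
Unshelve. all: by end_near.
Qed.

Lemma F_small u : 0 < u -> exists x, distrfun P X x < u.
Proof.
move=> u0; apply/not_existsP => H.
pose E (n : nat) := [set w | X w <= - n%:R].
have mE : forall n, measurable (E n) by move=> n; exact: mXle.
have UE : \bigcap_n E n = set0.
  apply/seteqP; split => // w /= /(_ (Num.truncn (- X w)).+1 I).
  rewrite /E /= lerNr => /(lt_le_trans (truncnS_gt _)); rewrite ltxx.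
  done.
have niE : nonincreasing_seq E.
  by move=> n m nm; apply/subsetPset => w /= /le_trans; apply; rewrite lerN2 ler_nat.
have cv : (P \o E) n @[n --> \oo] --> 0%E.
  rewrite -(measure0 P) -UE; apply: nonincreasing_cvg_mu => //.
    by rewrite (le_lt_trans (probability_le1 P (mE 0%N))) // ltey.
  by rewrite UE.
have : (u%:E <= lim ((P \o E) n @[n --> \oo]))%E.
  apply: lime_ge; first by apply/cvg_ex; exists 0%E.
  near=> n => /=; have /negP := H (- n%:R); rewrite -leNgt -lee_fin /distrfun.
  by rewrite fineK //; exact: Pfin (mE n).
by rewrite (cvg_lim _ cv) // lee_fin => /(lt_le_trans u0); rewrite ltxx.
Unshelve. all: by end_near.
Qed.

Hypothesis cF : continuous (distrfun P X).

Lemma cont_ball m eps : 0 < eps ->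
  exists2 r, 0 < r & forall t, `|m - t| < r -> `|distrfun P X m - distrfun P X t| < eps.
Proof.
move=> e0; have H := (cvgrPdist_lt _ _).1 (cF m) eps e0.
have [r /= r0 Hr] := (@nbhs_ballP R R^o m _).1 (H (nbhs_filter _)).
exists r => // t mt; apply: Hr.
Qed.

Lemma qinv_mono a b : a <= b -> (qinv (distrfun P X) a <= qinv (distrfun P X) b)%E.
Proof.
move=> ab; apply: ereal_inf_le_tmp; apply: image_subset => x /=.
exact: le_trans.
Qed.

Lemma qinv_cases u : 0 <= u <= 1 ->
  [\/ [set w | ((X w)%:E <= qinv (distrfun P X) u)%E] = set0 /\ u = 0,
      [set w | ((X w)%:E <= qinv (distrfun P X) u)%E] = setT /\ u = 1 |
      exists m, [set w | ((X w)%:E <= qinv (distrfun P X) u)%E] = [set w | X w <= m]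
         /\ distrfun P X m = u].
Proof.
move=> /andP[u0 u1]; set F := distrfun P X; set S := [set x | u <= F x].
have [ule0|ugt0] := leP u 0.
  have Su : S = setT by apply/seteqP; split => // x _; rewrite /S /= (le_trans ule0) // /F F_ge0.
  have -> : qinv F u = -oo%E by rewrite /qinv -/S Su ereal_inf_real.
  constructor 1; split; last by apply/le_anti; rewrite ule0.
  by apply/seteqP; split => // w /=; rewrite leeNy_eq.
have [[x0 Sx0]|S0] := pselect (S !=set0); last first.
  have S0' : S = set0 by apply/seteqP; split => // x Sx; apply: S0; exists x.
  have -> : qinv F u = +oo%E by rewrite /qinv -/S S0' image_set0 ereal_inf0.
  constructor 2; split; first by apply/seteqP; split => // w _ /=; rewrite leey.
  apply/le_anti; rewrite u1 /= leNgt; apply/negP => ult1.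
  have [x Fx] := F_big _ ult1; apply: S0; exists x; exact: ltW.
have [x1 Fx1] := F_small _ ugt0.
have lbS : lbound S x1.
  move=> x Sx; rewrite leNgt; apply/negP => xx1.
  have := F_mono _ _ (ltW xx1); rewrite -/F => Fxx1.
  have : u < u by apply: (le_lt_trans Sx); apply: (le_lt_trans Fxx1).
  by rewrite ltxx.
have hl : has_lbound S by exists x1.
have Sne : S !=set0 by exists x0.
have qE : qinv F u = (inf S)%:E by rewrite /qinv -/S ereal_inf_EFin.
set m := inf S.
have Fm : F m = u.
  apply/le_anti/andP; split.
  - rewrite leNgt; apply/negP => um.
    have [r r0 Hr] := cont_ball m (F m - u) ltac:(by rewrite subr_gt0).
    have St : S (m - r/2).
      have : `|m - (m - r / 2)| < r.
        rewrite opprB addrC subrK ger0_norm; first lra.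
        lra.
      move=> /Hr; rewrite ltr_norml => /andP[_ h]; rewrite /S /=.
      rewrite -/F in h; lra.
    have := ge_inf hl St; rewrite -/m; lra.
  - rewrite leNgt; apply/negP => Fmu.
    have [r r0 Hr] := cont_ball m (u - F m) ltac:(by rewrite subr_gt0).
    have : m + r/2 <= m.
      rewrite {2}/m; apply: (lb_le_inf Sne) => x Sx.
      rewrite leNgt; apply/negP => xlt.
      have mx : m <= x := ge_inf hl Sx.
      have : `|m - x| < r.
        rewrite distrC ger0_norm; first lra.
        lra.
      move=> /Hr; rewrite ltr_norml => /andP[h _].
      rewrite /S /= -/F in Sx h; lra.
    lra.
constructor 3; exists m; split => //; rewrite qE.
by apply/seteqP; split => w /=; rewrite lee_fin.
Qed.

End S.

Lemma cvg_right_eq (R : realType) (f g : R -> R) (l : R) :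
  (forall t, 0 < t -> f t = g t) ->
  (f t @[t --> 0^'+] --> l) <-> (g t @[t --> 0^'+] --> l).
Proof.
move=> fg; have H1 : \forall t \near 0^'+, f t = g t.
  by near=> t; apply: fg; near: t; exact: nbhs_right_gt.
split => h.
  apply: cvg_trans h; apply: near_eq_cvg; near=> t; near: t; exact: H1.
apply: cvg_trans h; apply: near_eq_cvg; near=> t; apply/esym; near: t; exact: H1.
Unshelve. all: by end_near.
Qed.

Lemma ppart_bounds (R : realType) (p t : R) : 0 <= p <= 1 -> 0 < t ->
  [/\ 0 <= ppart (p - t), npart (p + t) <= 1, ppart (p - t) < npart (p + t)
   & ppart (p - t) <= 1 /\ 0 <= npart (p + t)].
Proof.
move=> /andP[p0 p1] t0; rewrite /npart /ppart !maxEle.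
case: (leP (p - t) 0) => h1; case: (leP (1 - (p + t)) 0) => h2; split; lra.
Qed.

Section S2.
Context (d : measure_display) (T : measurableType d) (R : realType)
  (P : probability T R).

Lemma PRD (A B : set T) : measurable A -> measurable B -> B `<=` A ->
  fine (P (A `\` B)) = fine (P A) - fine (P B).
Proof.
move=> mA mB BA; rewrite measureD //; last first.
  by rewrite (le_lt_trans (probability_le1 P mA)) // ltey.
by rewrite (setIidr BA) fineB //; apply: Pfin.
Qed.

Lemma rectP (A A' B B' : set T) : measurable A -> measurable A' ->
  measurable B -> measurable B' -> A `<=` A' -> B `<=` B' ->
  fine (P ((A' `\` A) `&` (B' `\` B))) =
  fine (P (A' `&` B')) - fine (P (A' `&` B)) - fine (P (A `&` B')) + fine (P (A `&` B)).
Proof.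
move=> mA mA' mB mB' AA' BB'.
have e1 : (A' `\` A) `&` (B' `\` B) = (A' `&` (B' `\` B)) `\` (A `&` (B' `\` B)).
  by apply/seteqP; split => w /=; [move=> [[? ?] [? ?]]; split => // -[] | move=> [[? [? ?]] h]; split => //; split => // ?; apply: h].
have e2 Z : Z `&` (B' `\` B) = (Z `&` B') `\` (Z `&` B).
  by apply/seteqP; split => w /=; [move=> [? [? ?]]; split => // -[] | move=> [[? ?] h]; split => //; split => // ?; apply: h].
rewrite e1 PRD; first last.
- by move=> w [? ?]; split => //; exact: AA'.
- by apply: measurableI => //; exact: measurableD.
- by apply: measurableI => //; exact: measurableD.
rewrite !e2 !PRD; first (by rewrite opprB; ring); try by move=> w [? ?]; split => //; exact: BB'.
all: by apply: measurableI.
Qed.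

End S2.

Theorem proposition1 (d : measure_display) (T : measurableType d) (R : realType)
  (P : probability T R) (X Y : T -> R) (C : R -> R -> R) :
  measurable_fun setT X -> measurable_fun setT Y ->
  continuous (distrfun P X) -> continuous (distrfun P Y) ->
  is_copula C ->
  (forall x y, joint_distrfun P X Y x y = C (distrfun P X x) (distrfun P Y y)) ->
  forall p q : R, 0 <= p <= 1 -> 0 <= q <= 1 ->
  let F := distrfun P X in let G := distrfun P Y in
  let EX t := qband X F (ppart (p - t)) (npart (p + t)) in
  let EY t := qband Y G (ppart (q - t)) (npart (q + t)) in
  let V t := Cvol C (ppart (p - t)) (npart (p + t)) (ppart (q - t)) (npart (q + t)) in
  forall l : R,
  ((condprobE P (EY t) (EX t) @[t --> 0^'+] --> l) <->
     (V t / (npart (p + t) - ppart (p - t)) @[t --> 0^'+] --> l)) /\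
  ((condprobE P (EX t) (EY t) @[t --> 0^'+] --> l) <->
     (V t / (npart (q + t) - ppart (q - t)) @[t --> 0^'+] --> l)).
Proof.
move=> mX mY cFX cFY [Cb C2] HC p q hp hq F G EX EY V l.
pose AX u := [set w | ((X w)%:E <= qinv F u)%E].
pose AY u := [set w | ((Y w)%:E <= qinv G u)%E].
have qbX a b : qband X F a b = AX b `\` AX a.
  apply/seteqP; split => w /= [h1 h2]; split => //.
    by apply/negP; rewrite -ltNge.
  by rewrite ltNge; apply/negP.
have qbY a b : qband Y G a b = AY b `\` AY a.
  apply/seteqP; split => w /= [h1 h2]; split => //.
    by apply/negP; rewrite -ltNge.
  by rewrite ltNge; apply/negP.
have monX a b : a <= b -> AX a `<=` AX b.
  by move=> ab w /= /le_trans; apply; exact: (@qinv_mono _ _ _ P X a b ab).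
have monY a b : a <= b -> AY a `<=` AY b.
  by move=> ab w /= /le_trans; apply; exact: (@qinv_mono _ _ _ P Y a b ab).
have margX u : 0 <= u <= 1 -> measurable (AX u) /\ fine (P (AX u)) = u.
  move=> hu; rewrite /AX /F; case: (@qinv_cases _ _ _ P X mX cFX u hu) => [[-> ->]|[-> ->]|[m [-> Fm]]].
  - by split; [exact: measurable0 | rewrite measure0].
  - by split; [exact: measurableT | rewrite probability_setT].
  - by split; [exact: mXle | exact: Fm].
have margY u : 0 <= u <= 1 -> measurable (AY u) /\ fine (P (AY u)) = u.
  move=> hu; rewrite /AY /G; case: (@qinv_cases _ _ _ P Y mY cFY u hu) => [[-> ->]|[-> ->]|[m [-> Fm]]].
  - by split; [exact: measurable0 | rewrite measure0].
  - by split; [exact: measurableT | rewrite probability_setT].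
  - by split; [exact: mXle | exact: Fm].
have joint u v : 0 <= u <= 1 -> 0 <= v <= 1 -> fine (P (AX u `&` AY v)) = C u v.
  move=> hu hv; rewrite /AX /AY /F /G.
  case: (@qinv_cases _ _ _ P X mX cFX u hu) => [[-> u0]|[-> u1]|[m [-> Fm]]];
  case: (@qinv_cases _ _ _ P Y mY cFY v hv) => [[-> v0]|[-> v1]|[m' [-> Gm]]].
  all: rewrite ?set0I ?setI0 ?measure0 /=.
  all: try by rewrite u0; case: (Cb v hv).
  all: try by rewrite v0; case: (Cb u hu).
  - by rewrite setIT probability_setT u1; case: (Cb v hv) => _ _ _ ->.
  - by rewrite setTI u1; case: (Cb v hv) => _ _ _ ->; exact: Gm.
  - by rewrite setIT v1; case: (Cb u hu) => _ _ -> _; exact: Fm.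
  - by rewrite -Fm -Gm -HC.
have key t : 0 < t ->
  fine (P (EX t)) = npart (p + t) - ppart (p - t) /\
  fine (P (EY t)) = npart (q + t) - ppart (q - t) /\
  fine (P (EX t `&` EY t)) = V t.
  move=> t0.
  have [a0 b1 ab [a1 b0]] := @ppart_bounds _ p t hp t0.
  have [c0 e1 ce [c1 e0]] := @ppart_bounds _ q t hq t0.
  have ha : 0 <= ppart (p - t) <= 1 by rewrite a0 a1.
  have hb : 0 <= npart (p + t) <= 1 by rewrite b0 b1.
  have hc : 0 <= ppart (q - t) <= 1 by rewrite c0 c1.
  have he : 0 <= npart (q + t) <= 1 by rewrite e0 e1.
  have [mAa Pa] := margX _ ha; have [mAb Pb] := margX _ hb.
  have [mAc Pc] := margY _ hc; have [mAe Pe] := margY _ he.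
  split; [|split].
  - by rewrite /EX qbX PRD // ?Pa ?Pb //; apply: monX; exact: ltW.
  - by rewrite /EY qbY PRD // ?Pc ?Pe //; apply: monY; exact: ltW.
  - rewrite /EX /EY !qbX !qbY rectP //; try (apply: monX || apply: monY); try exact: ltW.
    by rewrite !joint.
split; apply: cvg_right_eq => t t0; have [h1 [h2 h3]] := key t t0; rewrite /condprobE.
  by rewrite setIC h3 h1.
by rewrite h3 h2.
Qed.
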